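(* Let $X,Y$ be finite sets with $\max\{|X|,|Y|\}\le N<\infty$, $c\in\mathbb R_+^{X\times Y}$, and let $\mu\in\mathcal P(X)$, $\nu\in\mathcal P(Y)$ satisfy $\mu=r/M$, $\nu=s/M$ for a positive integer $M$ and vectors $r\in\mathbb Z_{++}^X$, $s\in\mathbb Z_{++}^Y$ of strictly positive integers. Let $\varepsilon_1>\varepsilon_2>0$ and let $(\alpha_a,\beta_a)$ be a maximizer of $J_{\varepsilon_a}$ for $a=1,2$. Set $\Delta\alpha=\alpha_2-\alpha_1$, $\Delta\beta=\beta_2-\beta_1$. Then $$\max\Delta\alpha-\min\Delta\alpha\le\varepsilon_1 N(4\log N+24\log M),\qquad\max\Delta\beta-\min\Delta\beta\le\varepsilon_1N(4\log N+24\log M).$$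
   Context: For $\varepsilon>0$, $K_\varepsilon(x,y)=\exp(-c(x,y)/\varepsilon)\mu(x)\nu(y)$ and the dual entropic optimal transport functional is $J_\varepsilon(\alpha,\beta)=\langle\alpha,\mu\rangle+\langle\beta,\nu\rangle-\varepsilon\sum_{x,y}K_\varepsilon(x,y)\big(\exp((\alpha(x)+\beta(y))/\varepsilon)-1\big)$ for $\alpha\in\mathbb R^X,\beta\in\mathbb R^Y$. $\max\Delta\alpha$ denotes the largest entry of the vector $\Delta\alpha$ (similarly $\min$). *)

(* Defs.v *)
From HB Require Import structures.
From mathcomp Require Import all_boot all_order all_algebra.
From mathcomp Require Import all_classical all_reals all_analysis.
Set Implicit Arguments. Unset Strict Implicit. Unset Printing Implicit Defensive.
Import Order.TTheory GRing.Theory Num.Theory.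
Local Open Scope ring_scope.

Definition Keps (R : realType) (X Y : finType) (c : X -> Y -> R)
  (mu : X -> R) (nu : Y -> R) (eps : R) (x : X) (y : Y) : R :=
  expR (- c x y / eps) * mu x * nu y.

Definition Jeps (R : realType) (X Y : finType) (c : X -> Y -> R)
  (mu : X -> R) (nu : Y -> R) (eps : R) (alpha : X -> R) (beta : Y -> R) : R :=
  \sum_(x : X) alpha x * mu x + \sum_(y : Y) beta y * nu y
  - eps * \sum_(x : X) \sum_(y : Y)
      Keps c mu nu eps x y * (expR ((alpha x + beta y) / eps) - 1).

Definition is_maximizer (R : realType) (X Y : finType) (c : X -> Y -> R)
  (mu : X -> R) (nu : Y -> R) (eps : R) (alpha : X -> R) (beta : Y -> R) : Prop :=
  forall (a : X -> R) (b : Y -> R), Jeps c mu nu eps a b <= Jeps c mu nu eps alpha beta.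

(* Main.v *)
Require Import Defs.
From HB Require Import structures.
From mathcomp Require Import all_boot all_order all_algebra.
From mathcomp Require Import all_classical all_reals all_analysis.
From mathcomp Require Import ring lra zify.
Import Order.TTheory GRing.Theory Num.Theory.
Local Open Scope ring_scope.

Lemma key_ineq (R : realType) (m S e : R) : 0 < m -> 0 < S -> 0 < e ->
  (forall t, t * m - e * ((expR (t / e) - 1) * S) <= 0) -> S = m.
Proof.
move=> m0 S0 e0 H.
have := H (e * ln (m / S)).
have -> : e * ln (m / S) / e = ln (m / S) by rewrite mulrC mulKf ?gt_eqF.
rewrite lnK; last by rewrite posrE divr_gt0.
have -> : (m / S - 1) * S = m - S by rewrite mulrBl mulfVK ?gt_eqF // mul1r.
set z := ln (m / S).
have hz : expR (- z) = S / m.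
  by rewrite expRN /z lnK ?posrE ?divr_gt0 // invf_div.
case: (eqVneq z 0) => [z0|zn0].
  move: hz; rewrite z0 oppr0 expR0 => hz _.
  by rewrite -(mulfVK (negbT (gt_eqF m0)) S) -hz mul1r.
have h1 : 1 - z < S / m by rewrite -hz; apply: expR_gt1Dx; rewrite oppr_eq0.
have h2 : 0 < z * m - m + S.
  move: h1; rewrite ltr_pdivlMr // mulrBl mul1r => h1; lra.
have := mulr_gt0 e0 h2 => h3 h4; exfalso; nra.
Qed.
Lemma chain (R : realType) (Z : finType) (f : Z -> R) (G : R) (z0 z1 : Z) :
  0 <= G ->
  (forall t, f z0 <= t -> t + G <= f z1 -> exists w, t < f w /\ f w < t + G) ->
  f z1 - f z0 <= #|Z|%:R * G.
Proof.
move=> G0 H.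
have claim : forall k z, f z0 <= f z -> f z + k%:R * G < f z1 ->
    (k.+1 <= #|[pred w | ((f z <= f w) && (f w < f z1))%R]|)%N.
  elim=> [|k IH] z hz hk.
    apply/card_gt0P; exists z; rewrite inE lexx /=; move: hk; rewrite mul0r addr0 //.
  have hkG : 0 <= k%:R * G by rewrite mulr_ge0.
  have eS : (k.+1)%:R * G = k%:R * G + G by rewrite -addn1 natrD mulrDl mul1r.
  rewrite eS in hk.
  have [w [hw1 hw2]] := H (f z) hz ltac:(lra).
  have := IH w ltac:(lra) ltac:(lra) => IHw.
  apply: (leq_ltn_trans IHw); apply: fintype.proper_card; apply/fintype.properP; split.
    apply/fintype.subsetP => y; rewrite !inE => /andP[h1 h2]; apply/andP; split => //.
    exact: (le_trans (ltW hw1) h1).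
  exists z.
    rewrite inE lexx /=; lra.
  by rewrite inE; apply/negP => /andP[h _]; lra.
rewrite leNgt; apply/negP => hc.
have := claim #|Z| z0 (lexx _) ltac:(lra).
by rewrite ltnNge max_card.
Qed.

Lemma pigeon (R : realType) (X Y : finType) (pA : pred X) (pB : pred Y)
  (F : X -> Y -> R) (a : R) :
  0 < a -> a <= \sum_(x | pA x) \sum_(y | pB y) F x y ->
  exists x y, [/\ pA x, pB y & a / (2 * (#|X| * #|Y|)%:R) <= F x y].
Proof.
move=> a0 ha.
set q := a / (2 * (#|X| * #|Y|)%:R).
have q0 : 0 <= q by rewrite /q divr_ge0 ?(ltW a0) ?mulr_ge0 ?ler0n.
have [hex|hn0] := boolP [exists x, [exists y, [&& pA x, pB y & q <= F x y]]].
  by move/existsP: hex => [x /existsP[y /and3P[h1 h2 h3]]]; exists x, y.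
move: hn0; rewrite negb_exists => /forallP hn.
have hle : \sum_(x | pA x) \sum_(y | pB y) F x y <= \sum_(x : X) \sum_(y : Y) q.
  rewrite big_mkcond; apply: ler_sum => x _.
  case: ifP => hx; last by rewrite sumr_ge0.
  rewrite big_mkcond; apply: ler_sum => y _.
  case: ifP => hy //.
  move: (hn x); rewrite negb_exists => /forallP /(_ y).
  by rewrite hx hy /= -real_ltNge ?num_real // => /ltW.
move: hle; rewrite sumr_const sumr_const -mulrnA -mulr_natr mulnC => hle.
have := le_trans ha hle; rewrite /q.
have [->|hK] := eqVneq ((#|X| * #|Y|)%:R : R) 0.
  by rewrite mulr0 => h; exfalso; lra.
have -> : a / (2 * (#|X| * #|Y|)%:R) * (#|X| * #|Y|)%:R = a / 2 by rewrite invfM mulrA mulfVK.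
by move=> h; exfalso; lra.
Qed.
Lemma arith0 (R : realType) (e1 e2 G L lM lN la lb lw0 lw1 p1 p2 q1 q2 : R) :
  0 < e2 -> e2 < e1 -> 0 < lM -> 0 <= lN -> 0 <= L -> L <= lM + 2 * lN ->
  -(2 * lM) <= lw0 -> lw0 <= 0 -> -(2 * lM) <= lw1 -> lw1 <= 0 ->
  G = e1 * (2 * lN + 12 * lM) ->
  G <= e2 * (p2 - lw0) - e1 * (p1 - lw0) -> p2 <= lb -> la - L <= p1 ->
  e2 * (q2 - lw1) - e1 * (q1 - lw1) <= - G -> lb - L <= q2 -> q1 <= la -> False.
Proof.
move=> he2 he12 hM hN hL0 hL hw0 hw0' hw1 hw1' hG h1 hp2 hp1 h2 hq2 hq1.
have e1p : 0 < e1 by lra.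
have t1 : e2 * p2 <= e2 * lb by rewrite ler_pM2l.
have t2 : e1 * (la - L) <= e1 * p1 by rewrite ler_pM2l.
have t3 : e2 * (lb - L) <= e2 * q2 by rewrite ler_pM2l.
have t4 : e1 * q1 <= e1 * la by rewrite ler_pM2l.
have t5 : e2 * L <= e1 * L by rewrite ler_wpM2r // ltW.
have t6 : (e1 - e2) * lw0 <= 0 by rewrite pmulr_rle0 // subr_gt0.
have t7 : (e1 - e2) * (- (2 * lM)) <= (e1 - e2) * lw1 by rewrite ler_pM2l // subr_gt0.
have t8 : e1 * L <= e1 * (lM + 2 * lN) by rewrite ler_pM2l.
have t9 : 0 < e1 * lM by rewrite mulr_gt0.
have t10 : e2 * lM <= e1 * lM by rewrite ler_pM2r // ltW.
nra.
Qed.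

Lemma arith1 (R : realType) (e1 e2 G L lM lN la lb lw0 p1 p2 : R) :
  0 < e2 -> e2 < e1 -> 0 < lM -> 0 <= lN -> 0 <= L -> L <= lM + 2 * lN ->
  -(2 * lM) <= lw0 -> lw0 <= 0 ->
  G = e1 * (2 * lN + 12 * lM) ->
  G <= e2 * (p2 - lw0) - e1 * (p1 - lw0) -> p2 <= lb -> la - L <= p1 ->
  - lM <= la -> lb <= 0 -> False.
Proof.
move=> he2 he12 hM hN hL0 hL hw0 hw0' hG h1 hp2 hp1 hla hlb.
have e1p : 0 < e1 by lra.
have t1 : e2 * p2 <= e2 * lb by rewrite ler_pM2l.
have t2 : e1 * (la - L) <= e1 * p1 by rewrite ler_pM2l.
have t6 : (e1 - e2) * lw0 <= 0 by rewrite pmulr_rle0 // subr_gt0.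
have t8 : e1 * L <= e1 * (lM + 2 * lN) by rewrite ler_pM2l.
have t9 : 0 < e1 * lM by rewrite mulr_gt0.
have t11 : e2 * lb <= 0 by rewrite pmulr_rle0.
have t12 : e1 * (- lM) <= e1 * la by rewrite ler_pM2l.
nra.
Qed.

Lemma arith2 (R : realType) (e1 e2 G L lM lN la lb lw1 q1 q2 : R) :
  0 < e2 -> e2 < e1 -> 0 < lM -> 0 <= lN -> 0 <= L -> L <= lM + 2 * lN ->
  -(2 * lM) <= lw1 -> lw1 <= 0 ->
  G = e1 * (2 * lN + 12 * lM) ->
  e2 * (q2 - lw1) - e1 * (q1 - lw1) <= - G -> lb - L <= q2 -> q1 <= la ->
  la <= 0 -> - lM <= lb -> False.
Proof.
move=> he2 he12 hM hN hL0 hL hw1 hw1' hG h2 hq2 hq1 hla hlb.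
have e1p : 0 < e1 by lra.
have t3 : e2 * (lb - L) <= e2 * q2 by rewrite ler_pM2l.
have t4 : e1 * q1 <= e1 * la by rewrite ler_pM2l.
have t5 : e2 * L <= e1 * L by rewrite ler_wpM2r // ltW.
have t7 : (e1 - e2) * (- (2 * lM)) <= (e1 - e2) * lw1 by rewrite ler_pM2l // subr_gt0.
have t8 : e1 * L <= e1 * (lM + 2 * lN) by rewrite ler_pM2l.
have t9 : 0 < e1 * lM by rewrite mulr_gt0.
have t10 : e2 * lM <= e1 * lM by rewrite ler_pM2r // ltW.
have t11 : e1 * la <= 0 by rewrite pmulr_rle0.
have t12 : e2 * (- lM) <= e2 * lb by rewrite ler_pM2l.
nra.
Qed.
Lemma sum_sub_le (R : realType) (I : finType) (p : pred I) (F : I -> R) :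
  (forall i, 0 <= F i) -> \sum_(i | p i) F i <= \sum_i F i.
Proof.
move=> h; rewrite [X in _ <= X](bigID p) /= lerDl sumr_ge0 //.
Qed.

Lemma entry_le (R : realType) (X Y : finType) (pA : pred X) (pB : pred Y)
  (F : X -> Y -> R) x0 y0 :
  (forall x y, 0 <= F x y) -> pA x0 -> pB y0 ->
  F x0 y0 <= \sum_(x | pA x) \sum_(y | pB y) F x y.
Proof.
move=> h hx hy.
rewrite (bigD1 x0) //= (bigD1 y0) //= -addrA lerDl addr_ge0 // sumr_ge0 //.
by move=> i _; rewrite sumr_ge0.
Qed.

Lemma dsum_le (R : realType) (X Y : finType) (pA : pred X) (pB : pred Y)
  (F : X -> Y -> R) :
  (forall x y, 0 <= F x y) ->
  \sum_(x | pA x) \sum_(y | pB y) F x y <= \sum_x \sum_y F x y.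
Proof.
move=> h; apply: (le_trans (@sum_sub_le _ _ pA _ _)).
  by move=> i; rewrite sumr_ge0.
by apply: ler_sum => x _; apply: sum_sub_le.
Qed.

Lemma split_mass (R : realType) (X Y : finType) (pA : pred X) (pB : pred Y)
  (P : X -> Y -> R) (mu : X -> R) (nu : Y -> R) :
  (forall x, \sum_y P x y = mu x) -> (forall y, \sum_x P x y = nu y) ->
  \sum_(x | pA x) mu x - \sum_(y | pB y) nu y =
  \sum_(x | pA x) \sum_(y | ~~ pB y) P x y - \sum_(x | ~~ pA x) \sum_(y | pB y) P x y.
Proof.
move=> hr hc.
have e1 : \sum_(x | pA x) mu x = \sum_(x | pA x) \sum_(y | pB y) P x y
    + \sum_(x | pA x) \sum_(y | ~~ pB y) P x y.
  rewrite -big_split /=; apply: eq_bigr => x _; by rewrite -hr (bigID pB).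
have e2 : \sum_(y | pB y) nu y = \sum_(x | pA x) \sum_(y | pB y) P x y
    + \sum_(x | ~~ pA x) \sum_(y | pB y) P x y.
  rewrite exchange_big [X in _ = _ + X]exchange_big -big_split /=.
  by apply: eq_bigr => y _; rewrite -hc (bigID pA).
rewrite e1 e2; lra.
Qed.
Lemma frac_bounds (R : realType) (k M : nat) : (0 < k)%N -> (k <= M)%N ->
  [/\ 0 < (k%:R / M%:R : R), - ln (M%:R : R) <= ln (k%:R / M%:R : R)
    & ln (k%:R / M%:R : R) <= 0].
Proof.
move=> k0 kM.
have M0 : (0 : R) < M%:R by rewrite ltr0n (leq_trans k0 kM).
have p : (0 : R) < k%:R / M%:R by rewrite divr_gt0 // ltr0n.
split => //.
  rewrite -lnV ?posrE // ler_ln ?posrE ?invr_gt0 //.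
  by rewrite -[X in X <= _]mul1r ler_wpM2r ?invr_ge0 ?ler0n // ler1n.
by apply: ln_le0; rewrite ler_pdivrMr // mul1r ler_nat.
Qed.

Lemma nonempty_of_sum (X : finType) (r : X -> nat) (M : nat) :
  (\sum_(x : X) r x)%N = M -> (0 < M)%N -> exists x : X, true.
Proof.
move=> hrs hM.
case: (pickP (fun _ : X => true)) => [x _|h]; first by exists x.
have h0 : (\sum_(x : X) r x = 0)%N by rewrite big1 // => x _; have := h x.
by move: hM; rewrite -hrs h0.
Qed.

Lemma le_sum_nat (X : finType) (r : X -> nat) (x : X) : (r x <= \sum_(x : X) r x)%N.
Proof. by rewrite (bigD1 x) //= leq_addr. Qed.

Definition fz (R : Type) (X Y : finType) (u : X -> R) (v : Y -> R) (z : X + Y) : R :=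
  match z with inl x => u x | inr y => v y end.
Arguments fz {R X Y}.

Lemma gap (R : realType) (X Y : finType) (N M : nat) (r : X -> nat) (s : Y -> nat)
  (P1 P2 : X -> Y -> R) (e1 e2 : R) (u : X -> R) (v : Y -> R) (t G : R) :
  (1 < M)%N -> (#|X| <= N)%N -> (#|Y| <= N)%N -> 0 < e2 -> e2 < e1 ->
  (forall x, 0 < r x)%N -> (forall y, 0 < s y)%N ->
  (\sum_(x : X) r x)%N = M -> (\sum_(y : Y) s y)%N = M ->
  (forall x y, 0 < P1 x y) -> (forall x y, 0 < P2 x y) ->
  (forall x, \sum_y P1 x y = (r x)%:R / M%:R) ->
  (forall y, \sum_x P1 x y = (s y)%:R / M%:R) ->
  (forall x, \sum_y P2 x y = (r x)%:R / M%:R) ->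
  (forall y, \sum_x P2 x y = (s y)%:R / M%:R) ->
  (forall x y, u x - v y =
     e2 * (ln (P2 x y) - ln ((r x)%:R / M%:R * ((s y)%:R / M%:R)))
   - e1 * (ln (P1 x y) - ln ((r x)%:R / M%:R * ((s y)%:R / M%:R)))) ->
  G = e1 * (2 * ln (N%:R : R) + 12 * ln (M%:R : R)) ->
  (forall x, u x <= t \/ t + G <= u x) -> (forall y, v y <= t \/ t + G <= v y) ->
  (exists z, fz u v z <= t) -> (exists z, t + G <= fz u v z) -> False.
Proof.
move=> hM hNX hNY he2 he12 hr hs hrs hss hP1 hP2 r1 c1 r2 c2 hD hG hu hv
  [z0 hz0] [z1 hz1].
have M0 : (0 < M)%N by apply: ltn_trans hM.
have MR : (0 : R) < M%:R by rewrite ltr0n.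
have lM0 : 0 < ln (M%:R : R) by apply: ln_gt0; rewrite ltr1n.
have [x0 _] := nonempty_of_sum _ _ _ hrs M0.
have [y0 _] := nonempty_of_sum _ _ _ hss M0.
have cX : (0 < #|X|)%N by apply/card_gt0P; exists x0.
have cY : (0 < #|Y|)%N by apply/card_gt0P; exists y0.
have N1 : (1 <= N)%N by apply: leq_trans hNX.
have lN0 : 0 <= ln (N%:R : R) by apply: ln_ge0; rewrite ler1n.
set Kr : R := 2 * (#|X| * #|Y|)%:R.
have Kr1 : 1 <= Kr.
  by rewrite /Kr -natrM ler1n muln_gt0 /= muln_gt0 cX cY.
have Kr0 : 0 < Kr by lra.
set L := ln Kr.
have L0 : 0 <= L by apply: ln_ge0.
have LM : L <= ln (M%:R : R) + 2 * ln (N%:R : R).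
  have hn : (2 * (#|X| * #|Y|) <= M * (N * N))%N by apply: leq_mul => //; apply: leq_mul.
  have N0 : (0 : R) < N%:R by rewrite ltr0n.
  have e : ln (M%:R : R) + 2 * ln (N%:R : R) = ln (M%:R * (N%:R * N%:R)).
    rewrite !lnM ?posrE ?mulr_gt0 //; lra.
  rewrite e /L ler_ln ?posrE ?mulr_gt0 ?ltr0n ?muln_gt0 ?cX ?cY //.
  by rewrite /Kr -!natrM ler_nat.
have hw : forall x y, -(2 * ln (M%:R : R)) <= ln ((r x)%:R / M%:R * ((s y)%:R / M%:R))
    /\ ln ((r x)%:R / M%:R * ((s y)%:R / M%:R) : R) <= 0.
  move=> x y.
  have [p1 l1 u1] := frac_bounds R _ _ (hr x) (leq_trans (le_sum_nat _ r x) (eq_leq hrs)).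
  have [p2 l2 u2] := frac_bounds R _ _ (hs y) (leq_trans (le_sum_nat _ s y) (eq_leq hss)).
  rewrite lnM ?posrE //; split; lra.
have G0 : 0 < G by rewrite hG mulr_gt0 //; [lra | lra].
pose A := fun x => t + G <= u x.
pose B := fun y => t + G <= v y.
have hAc : forall x, ~~ A x -> u x <= t.
  by move=> x hx; case: (hu x) => // h; rewrite /A h in hx.
have hBc : forall y, ~~ B y -> v y <= t.
  by move=> y hy; case: (hv y) => // h; rewrite /B h in hy.
have lowA : forall x, u x <= t -> ~~ A x by move=> x h; apply/negP; rewrite /A => h'; lra.
have lowB : forall y, v y <= t -> ~~ B y by move=> y h; apply/negP; rewrite /B => h'; lra.
pose a1 := \sum_(x | A x) \sum_(y | ~~ B y) P1 x y.
pose a2 := \sum_(x | ~~ A x) \sum_(y | B y) P1 x y.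
pose b1 := \sum_(x | A x) \sum_(y | ~~ B y) P2 x y.
pose b2 := \sum_(x | ~~ A x) \sum_(y | B y) P2 x y.
pose nA := (\sum_(x | A x) r x)%N.
pose nB := (\sum_(y | B y) s y)%N.
have hmA : \sum_(x | A x) (r x)%:R / M%:R = nA%:R / M%:R :> R.
  by rewrite /nA natr_sum mulr_suml.
have hmB : \sum_(y | B y) (s y)%:R / M%:R = nB%:R / M%:R :> R.
  by rewrite /nB natr_sum mulr_suml.
have hd1 : nA%:R / M%:R - nB%:R / M%:R = a1 - a2.
  by rewrite -hmA -hmB; exact: split_mass.
have hd2 : nA%:R / M%:R - nB%:R / M%:R = b1 - b2.
  by rewrite -hmA -hmB; exact: split_mass.
have tot : forall P : X -> Y -> R, (forall x, \sum_y P x y = (r x)%:R / M%:R) ->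
    \sum_x \sum_y P x y = 1.
  move=> P hP; under eq_bigr do rewrite hP.
  by rewrite -mulr_suml -natr_sum hrs divff // gt_eqF.
have a1ge : 0 <= a1 by rewrite sumr_ge0 // => x _; rewrite sumr_ge0 // => y _; exact: ltW.
have a2ge : 0 <= a2 by rewrite sumr_ge0 // => x _; rewrite sumr_ge0 // => y _; exact: ltW.
have b1ge : 0 <= b1 by rewrite sumr_ge0 // => x _; rewrite sumr_ge0 // => y _; exact: ltW.
have b2ge : 0 <= b2 by rewrite sumr_ge0 // => x _; rewrite sumr_ge0 // => y _; exact: ltW.
have a2le : a2 <= 1.
  by rewrite -(tot P1 r1); apply: dsum_le => x y; exact: ltW.
have b1le : b1 <= 1.
  by rewrite -(tot P2 r2); apply: dsum_le => x y; exact: ltW.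
have wit : exists x y, (A x && ~~ B y) || (~~ A x && B y).
  case: z0 hz0 => [x|y] /= h0.
    case hb: (B y0).
      by exists x, y0; apply/orP; right; rewrite hb lowA.
    case: z1 hz1 => [x1|y1] /= h1.
      by exists x1, y0; apply/orP; left; rewrite hb /A h1.
    by exists x, y1; apply/orP; right; rewrite lowA // /B h1.
  case ha: (A x0).
    by exists x0, y; apply/orP; left; rewrite ha lowB.
  case: z1 hz1 => [x1|y1] /= h1.
    by exists x1, y; apply/orP; left; rewrite lowB // /A h1.
  by exists x0, y1; apply/orP; right; rewrite ha /B h1.
have posw : forall P : X -> Y -> R, (forall x y, 0 < P x y) ->
    \sum_(x | A x) \sum_(y | ~~ B y) P x y = \sum_(x | ~~ A x) \sum_(y | B y) P x y ->
    0 < \sum_(x | A x) \sum_(y | ~~ B y) P x y.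
  move=> P hP he; have [x [y /orP[/andP[ha hb]|/andP[ha hb]]]] := wit.
    apply: (lt_le_trans (hP x y)); apply: entry_le => // x' y'; exact: ltW.
  rewrite he; apply: (lt_le_trans (hP x y)); apply: entry_le => // x' y'; exact: ltW.
have stepI : 0 < a1 -> exists x y, [/\ G <= u x - v y, ln (P2 x y) <= ln b1
    & ln a1 - L <= ln (P1 x y)].
  move=> a10.
  have [x [y [ha hb hp]]] := pigeon R X Y A (fun y => ~~ B y) P1 a1 a10 (lexx _).
  exists x, y; split.
  - by have := hBc y hb; rewrite /A in ha; lra.
  - have hle : P2 x y <= b1 by apply: entry_le => // x' y'; exact: ltW.
    by rewrite ler_ln ?posrE ?(hP2 x y) ?(lt_le_trans (hP2 x y) hle).
  - have : ln (a1 / Kr) <= ln (P1 x y) by rewrite ler_ln ?posrE ?divr_gt0.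
    by rewrite lnM ?posrE ?invr_gt0 // lnV ?posrE.
have stepII : 0 < b2 -> exists x y, [/\ u x - v y <= - G, ln b2 - L <= ln (P2 x y)
    & ln (P1 x y) <= ln a2].
  move=> b20.
  have [x [y [ha hb hp]]] := pigeon R X Y (fun x => ~~ A x) B P2 b2 b20 (lexx _).
  exists x, y; split.
  - by have := hAc x ha; rewrite /B in hb; lra.
  - have : ln (b2 / Kr) <= ln (P2 x y) by rewrite ler_ln ?posrE ?divr_gt0.
    by rewrite lnM ?posrE ?invr_gt0 // lnV ?posrE.
  - have hle : P1 x y <= a2 by apply: entry_le => // x' y'; exact: ltW.
    by rewrite ler_ln ?posrE ?(hP1 x y) ?(lt_le_trans (hP1 x y) hle).
have Mi : (0 : R) < M%:R^-1 by rewrite invr_gt0.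
have lnMi : forall a : R, M%:R^-1 <= a -> - ln (M%:R : R) <= ln a.
  move=> a ha; have a0 : 0 < a by apply: lt_le_trans Mi ha.
  by rewrite -lnV ?posrE // ler_ln ?posrE.
case: (ltngtP nA nB) => hAB.
-
  have h1 : 1 <= nB%:R - nA%:R :> R.
    by move: hAB; rewrite -(ler_nat R) -addn1 natrD => h; lra.
  have h2 : M%:R^-1 <= nB%:R / M%:R - nA%:R / M%:R :> R.
    by have := ler_wpM2r (ltW Mi) h1; rewrite mul1r mulrBl.
  have b2M : M%:R^-1 <= b2 by lra.
  have [x [y [hxy hq2 hq1]]] := stepII (lt_le_trans Mi b2M).
  have [hw1 hw2] := hw x y.
  rewrite hD in hxy.
  exact: (arith2 _ _ _ _ _ _ _ _ _ _ _ _ he2 he12 lM0 lN0 L0 LM hw1 hw2 hG hxy hq2 hq1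
    (ln_le0 a2le) (lnMi _ b2M)).
-
  have h1 : 1 <= nA%:R - nB%:R :> R.
    by move: hAB; rewrite -(ler_nat R) -addn1 natrD => h; lra.
  have h2 : M%:R^-1 <= nA%:R / M%:R - nB%:R / M%:R :> R.
    by have := ler_wpM2r (ltW Mi) h1; rewrite mul1r mulrBl.
  have a1M : M%:R^-1 <= a1 by lra.
  have [x [y [hxy hp2 hp1]]] := stepI (lt_le_trans Mi a1M).
  have [hw1 hw2] := hw x y.
  rewrite hD in hxy.
  exact: (arith1 _ _ _ _ _ _ _ _ _ _ _ _ he2 he12 lM0 lN0 L0 LM hw1 hw2 hG hxy hp2 hp1
    (lnMi _ a1M) (ln_le0 b1le)).
-
  have ea : a1 = a2 by move: hd1; rewrite hAB subrr => h; lra.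
  have eb : b1 = b2 by move: hd2; rewrite hAB subrr => h; lra.
  have a10 : 0 < a1 by apply: posw.
  have b10 : 0 < b1 by apply: posw.
  have [x [y [hxy hp2 hp1]]] := stepI a10.
  have [x' [y' [hxy' hq2 hq1]]] := stepII (ltac:(by rewrite -eb)).
  have [hw1 hw2] := hw x y.
  have [hw1' hw2'] := hw x' y'.
  rewrite hD in hxy; rewrite hD in hxy'.
  rewrite -eb in hq2; rewrite -ea in hq1.
  exact: (arith0 _ _ _ _ _ _ _ _ _ _ _ _ _ _ _ he2 he12 lM0 lN0 L0 LM hw1 hw2 hw1' hw2'
    hG hxy hp2 hp1 hxy' hq2 hq1).
Qed.

Lemma sum_bump (R : realType) (X : finType) (x : X) (f g : X -> R) (t : R) :
  \sum_z (if z == x then f z + t else f z) * g z = \sum_z f z * g z + t * g x.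
Proof.
rewrite (bigD1 x) //= [in RHS](bigD1 x) //= eqxx.
rewrite (eq_bigr (fun z => f z * g z)); last by move=> z hz; rewrite (negbTE hz).
rewrite mulrDl -!addrA; congr (_ + _); exact: addrC.
Qed.

Lemma inner_y (R : realType) (k a b e : R) :
  k * (expR (a / e + b / e) - 1) = k * (expR (a / e) - 1) + (expR (b / e) - 1) * (k * expR (a / e)).
Proof.
rewrite expRD; ring.
Qed.

Lemma sum2_bump (R : realType) (X Y : finType) (x : X) (K : X -> Y -> R)
  (f : X -> R) (h : Y -> R) (t e : R) :
  \sum_z \sum_y K z y * (expR (((if z == x then f z + t else f z) + h y) / e) - 1) =
  \sum_z \sum_y K z y * (expR ((f z + h y) / e) - 1) +
  (expR (t / e) - 1) * \sum_y K x y * expR ((f x + h y) / e).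
Proof.
rewrite (bigD1 x) //= [in RHS](bigD1 x) //= eqxx.
rewrite (eq_bigr (fun z => \sum_y K z y * (expR ((f z + h y) / e) - 1))); last first.
  by move=> z hz; rewrite (negbTE hz).
have -> : \sum_y K x y * (expR ((f x + t + h y) / e) - 1) =
    \sum_y K x y * (expR ((f x + h y) / e) - 1) +
    (expR (t / e) - 1) * \sum_y K x y * expR ((f x + h y) / e).
  rewrite mulr_sumr -big_split; apply: eq_bigr => y _.
  rewrite (_ : (f x + t + h y) / e = (f x + h y) / e + t / e); last first.
    by rewrite -mulrDl addrAC.
  exact: inner_y.
rewrite -!addrA; congr (_ + _); exact: addrC.
Qed.

Lemma J_perturb (R : realType) (X Y : finType) (c : X -> Y -> R) (mu : X -> R)
  (nu : Y -> R) (eps : R) (al : X -> R) (be : Y -> R) (x : X) (t : R) :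
  Jeps c mu nu eps (fun z => if z == x then al z + t else al z) be =
  Jeps c mu nu eps al be + (t * mu x - eps * ((expR (t / eps) - 1) *
    \sum_y Keps c mu nu eps x y * expR ((al x + be y) / eps))).
Proof.
rewrite /Jeps sum_bump sum2_bump.
set A := \sum_z al z * mu z.
set B := \sum_y be y * nu y.
set S := \sum_z \sum_y Keps c mu nu eps z y * (expR ((al z + be y) / eps) - 1).
set D := \sum_y Keps c mu nu eps x y * expR ((al x + be y) / eps).
set E := expR (t / eps).
ring.
Qed.
Lemma foc_row (R : realType) (X Y : finType) (c : X -> Y -> R) (mu : X -> R)
  (nu : Y -> R) (eps : R) (al : X -> R) (be : Y -> R) :
  0 < eps -> (forall x, 0 < mu x) -> (forall y, 0 < nu y) -> (exists y : Y, true) ->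
  is_maximizer c mu nu eps al be ->
  forall x, \sum_y Keps c mu nu eps x y * expR ((al x + be y) / eps) = mu x.
Proof.
move=> e0 hmu hnu [y0 _] hmax x.
apply: (@key_ineq R (mu x) _ eps) => //.
  have h : 0 < Keps c mu nu eps x y0 * expR ((al x + be y0) / eps).
    by rewrite /Keps !mulr_gt0 ?expR_gt0.
  apply: (lt_le_trans h); rewrite (bigD1 y0) //= lerDl sumr_ge0 // => y _.
  by rewrite /Keps !mulr_ge0 ?expR_ge0 // ltW.
move=> t; have := hmax (fun z => if z == x then al z + t else al z) be.
by rewrite J_perturb gerDl.
Qed.

Lemma Jeps_swap (R : realType) (X Y : finType) (c : X -> Y -> R) (mu : X -> R)
  (nu : Y -> R) (eps : R) (al : X -> R) (be : Y -> R) :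
  Jeps c mu nu eps al be = Jeps (fun y x => c x y) nu mu eps be al.
Proof.
have hS : \sum_x \sum_y Keps c mu nu eps x y * (expR ((al x + be y) / eps) - 1) =
  \sum_y \sum_x Keps (fun y x => c x y) nu mu eps y x * (expR ((be y + al x) / eps) - 1).
  rewrite exchange_big; apply: eq_bigr => y _; apply: eq_bigr => x _.
  by rewrite /Keps [_ * mu x * nu y]mulrAC [al x + _]addrC.
rewrite /Jeps hS.
set A := \sum_x al x * mu x.
set B := \sum_y be y * nu y.
set S := \sum_y \sum_x _.
ring.
Qed.

Lemma foc_col (R : realType) (X Y : finType) (c : X -> Y -> R) (mu : X -> R)
  (nu : Y -> R) (eps : R) (al : X -> R) (be : Y -> R) :
  0 < eps -> (forall x, 0 < mu x) -> (forall y, 0 < nu y) -> (exists x : X, true) ->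
  is_maximizer c mu nu eps al be ->
  forall y, \sum_x Keps c mu nu eps x y * expR ((al x + be y) / eps) = nu y.
Proof.
move=> e0 hmu hnu hx hmax y.
have hmax' : is_maximizer (fun y x => c x y) nu mu eps be al.
  move=> a b.
  rewrite -(Jeps_swap _ _ _ c mu nu eps b a) -(Jeps_swap _ _ _ c mu nu eps al be).
  exact: hmax.
have := foc_row _ _ _ _ _ _ _ _ _ e0 hnu hmu hx hmax' y.
move=> <-; apply: eq_bigr => x _.
by rewrite /Keps [_ * mu x * nu y]mulrAC [al x + _]addrC.
Qed.

Lemma all_eq_of_sum (X : finType) (r : X -> nat) (M : nat) :
  (forall x, 0 < r x)%N -> (\sum_(x : X) r x)%N = M -> (M <= 1)%N ->
  forall x x' : X, x = x'.
Proof.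
move=> hr hrs hM1 x x'.
case: (eqVneq x x') => // hne; exfalso.
have h2 : (r x + r x' <= \sum_(i : X) r i)%N.
  rewrite (bigD1 x) //= leq_add2l (bigD1 x') /=; first exact: leq_addr.
  by rewrite eq_sym hne.
have := hr x; have := hr x'; rewrite hrs in h2; lia.
Qed.

Theorem mainTheorem6 (R : realType) (X Y : finType) (N M : nat)
  (hNX : (#|X| <= N)%N) (hNY : (#|Y| <= N)%N)
  (c : X -> Y -> R) (hc : forall x y, 0 <= c x y)
  (r : X -> nat) (s : Y -> nat) (hM : (0 < M)%N)
  (hr : forall x, (0 < r x)%N) (hs : forall y, (0 < s y)%N)
  (hrsum : (\sum_(x : X) r x)%N = M) (hssum : (\sum_(y : Y) s y)%N = M)
  (eps1 eps2 : R) (heps2 : 0 < eps2) (heps12 : eps2 < eps1)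
  (alpha1 alpha2 : X -> R) (beta1 beta2 : Y -> R)
  (hmax1 : is_maximizer c (fun x => (r x)%:R / M%:R) (fun y => (s y)%:R / M%:R)
             eps1 alpha1 beta1)
  (hmax2 : is_maximizer c (fun x => (r x)%:R / M%:R) (fun y => (s y)%:R / M%:R)
             eps2 alpha2 beta2) :
  (forall x x' : X,
     (alpha2 x - alpha1 x) - (alpha2 x' - alpha1 x')
       <= eps1 * N%:R * (4 * ln (N%:R : R) + 24 * ln (M%:R : R))) /\
  (forall y y' : Y,
     (beta2 y - beta1 y) - (beta2 y' - beta1 y')
       <= eps1 * N%:R * (4 * ln (N%:R : R) + 24 * ln (M%:R : R))).
Proof.
have MR : (0 : R) < M%:R by rewrite ltr0n.
have heps1 : 0 < eps1 by lra.
have [x0 _] := nonempty_of_sum _ _ _ hrsum hM.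
have [y0 _] := nonempty_of_sum _ _ _ hssum hM.
have N1 : (1 <= N)%N.
  by apply: leq_trans hNX; apply/card_gt0P; exists x0.
have lN0 : 0 <= ln (N%:R : R) by apply: ln_ge0; rewrite ler1n.
have lM0 : 0 <= ln (M%:R : R) by apply: ln_ge0; rewrite ler1n.
have RHS0 : 0 <= eps1 * N%:R * (4 * ln (N%:R : R) + 24 * ln (M%:R : R)).
  apply: mulr_ge0; first by apply: mulr_ge0; [exact: ltW | exact: ler0n].
  by apply: addr_ge0; apply: mulr_ge0.
case: (leqP M 1) => hM1.
  split=> [x x'|y y'].
    by rewrite (all_eq_of_sum _ _ _ hr hrsum hM1 x x') subrr.
  by rewrite (all_eq_of_sum _ _ _ hs hssum hM1 y y') subrr.
have hmu : forall x, (0 : R) < (r x)%:R / M%:R by move=> x; rewrite divr_gt0 // ltr0n.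
have hnu : forall y, (0 : R) < (s y)%:R / M%:R by move=> y; rewrite divr_gt0 // ltr0n.
pose P1 := fun x y => expR (- c x y / eps1) * ((r x)%:R / M%:R) * ((s y)%:R / M%:R)
  * expR ((alpha1 x + beta1 y) / eps1).
pose P2 := fun x y => expR (- c x y / eps2) * ((r x)%:R / M%:R) * ((s y)%:R / M%:R)
  * expR ((alpha2 x + beta2 y) / eps2).
have r1 : forall x, \sum_y P1 x y = (r x)%:R / M%:R.
  exact: (foc_row _ _ _ _ _ _ _ _ _ heps1 hmu hnu (ex_intro _ y0 isT) hmax1).
have r2 : forall x, \sum_y P2 x y = (r x)%:R / M%:R.
  exact: (foc_row _ _ _ _ _ _ _ _ _ heps2 hmu hnu (ex_intro _ y0 isT) hmax2).
have c1 : forall y, \sum_x P1 x y = (s y)%:R / M%:R.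
  exact: (foc_col _ _ _ _ _ _ _ _ _ heps1 hmu hnu (ex_intro _ x0 isT) hmax1).
have c2 : forall y, \sum_x P2 x y = (s y)%:R / M%:R.
  exact: (foc_col _ _ _ _ _ _ _ _ _ heps2 hmu hnu (ex_intro _ x0 isT) hmax2).
have hP1 : forall x y, 0 < P1 x y.
  move=> x y; apply: mulr_gt0; last exact: expR_gt0.
  by apply: mulr_gt0; [apply: mulr_gt0; [exact: expR_gt0|exact: hmu]|exact: hnu].
have hP2 : forall x y, 0 < P2 x y.
  move=> x y; apply: mulr_gt0; last exact: expR_gt0.
  by apply: mulr_gt0; [apply: mulr_gt0; [exact: expR_gt0|exact: hmu]|exact: hnu].
have lnP : forall (e a b k m n : R), 0 < m -> 0 < n -> e != 0 ->
    e * (ln (expR (- k / e) * m * n * expR ((a + b) / e)) - ln (m * n)) = a + b - k.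
  move=> e a b k m n m0 n0 e0.
  have -> : expR (- k / e) * m * n * expR ((a + b) / e) = (m * n) * expR ((a + b - k) / e).
    rewrite [X in _ = _ * expR X]mulrDl expRD.
    set E1 := expR (- k / e); set E2 := expR ((a + b) / e); ring.
  rewrite lnM ?posrE ?expR_gt0 ?mulr_gt0 // expRK addrAC subrr add0r.
  by rewrite mulrC divfK.
have hD : forall x y, (alpha2 x - alpha1 x) - (beta1 y - beta2 y) =
     eps2 * (ln (P2 x y) - ln ((r x)%:R / M%:R * ((s y)%:R / M%:R)))
   - eps1 * (ln (P1 x y) - ln ((r x)%:R / M%:R * ((s y)%:R / M%:R))).
  move=> x y.
  rewrite /P1 /P2 !lnP ?hmu ?hnu ?gt_eqF //; lra.
pose u := fun x => alpha2 x - alpha1 x.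
pose v := fun y => beta1 y - beta2 y.
pose G := eps1 * (2 * ln (N%:R : R) + 12 * ln (M%:R : R)).
have G0 : 0 <= G by apply: mulr_ge0; [exact: ltW | apply: addr_ge0; apply: mulr_ge0].
have gapH : forall (z0 z1 : X + Y) t, fz u v z0 <= t -> t + G <= fz u v z1 ->
    exists w, t < fz u v w /\ fz u v w < t + G.
  move=> z0 z1 t h0 h1.
  have [hex|hn] := boolP [exists w, (t < fz u v w) && (fz u v w < t + G)].
    by case/existsP: hex => w /andP[ha hb]; exists w.
  exfalso; move: hn; rewrite negb_exists => /forallP hn.
  have hu : forall x, u x <= t \/ t + G <= u x.
    by move=> x; have := hn (inl x); rewrite /= negb_and -!leNgt => /orP[]; [left|right].
  have hv : forall y, v y <= t \/ t + G <= v y.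
    by move=> y; have := hn (inr y); rewrite /= negb_and -!leNgt => /orP[]; [left|right].
  exact: (gap R X Y N M r s P1 P2 eps1 eps2 u v t G hM1 hNX hNY heps2 heps12 hr hs
    hrsum hssum hP1 hP2 r1 c1 r2 c2 hD erefl hu hv (ex_intro _ z0 h0) (ex_intro _ z1 h1)).
have fin : forall d, d <= #|{: X + Y}|%:R * G ->
    d <= eps1 * N%:R * (4 * ln (N%:R : R) + 24 * ln (M%:R : R)).
  move=> d hd; apply: (le_trans hd).
  have hc2 : (#|{: X + Y}| <= 2 * N)%N by rewrite card_sum; lia.
  apply: (le_trans (ler_wpM2r G0 (_ : _ <= (2 * N)%:R))); first by rewrite ler_nat.
  rewrite le_eqVlt; apply/orP; left; apply/eqP; rewrite natrM /G; ring.
split=> [x x'|y y'].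
  exact: (fin _ (chain R _ (fz u v) G (inl x') (inl x) G0 (gapH (inl x') (inl x)))).
have e : (beta2 y - beta1 y) - (beta2 y' - beta1 y') = fz u v (inr y') - fz u v (inr y).
  by rewrite /= /v; ring.
rewrite e.
exact: (fin _ (chain R _ (fz u v) G (inr y) (inr y') G0 (gapH (inr y) (inr y')))).
Qed.
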